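(* Under the standing assumptions, let $\{x_i\}_{i=1}^N$ be a solution of the delayed Hegselmann–Krause system, and let $C\in(0,1)$ be as defined below. Put $\tilde C:=1-e^{-K\bar\tau}(1-C)\in(0,1)$. Then $D_{n+1}\le\tilde C\,D_{n-2}$ for all integers $n\ge2$, and consequently $D_{3n}\le\tilde C^{\,n}D_0$ for all $n\in\mathbb{N}_0$.
   Context: Standing assumptions: $N\ge 2$, $d\ge 1$, $\bar\tau>0$; $\tau:[0,\infty)\to[0,\bar\tau]$ continuous; $\psi:\mathbb{R}^d\times\mathbb{R}^d\to\mathbb{R}$ continuous, bounded and strictly positive, $K:=\|\psi\|_\infty$; initial data $x_i^0:[-\bar\tau,0]\to\mathbb{R}^d$ continuous. The delayed Hegselmann–Krause system is $$\frac{d}{dt}x_i(t)=\frac{1}{N-1}\sum_{j\ne i}\psi\big(x_i(t),x_j(t-\tau(t))\big)\big(x_j(t-\tau(t))-x_i(t)\big),\quad t>0,$$ with $x_i=x_i^0$ on $[-\bar\tau,0]$; a solution means continuous $x_i:[-\bar\tau,\infty)\to\mathbb{R}^d$, differentiable on $(0,\infty)$, satisfying this. For $n\in\mathbb{N}_0$, $D_n:=\max_{i,j=1,\dots,N}\max_{s,t\in[n\bar\tau-\bar\tau,\,n\bar\tau]}|x_i(s)-x_j(t)|$. $M^0:=\max_{i}\max_{s\in[-\bar\tau,0]}|x_i(s)|$, $\psi_0:=\min_{|y|,|z|\le M^0}\psi(y,z)$, and $C:=\max\{1-e^{-2K\bar\tau},\ 1-\frac{\psi_0}{K}(1-e^{-K\bar\tau})\}$.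 *)

(* Defs.v *)
From HB Require Import structures.
From mathcomp Require Import all_boot all_order all_algebra.
From mathcomp Require Import all_classical all_reals all_analysis.
Set Implicit Arguments. Unset Strict Implicit. Unset Printing Implicit Defensive.
Import Order.TTheory GRing.Theory Num.Theory.
Import numFieldNormedType.Exports.
Local Open Scope classical_set_scope.
Local Open Scope ring_scope.

Definition enorm {R : realType} {d : nat} (v : 'rV[R]_d) : R :=
  Num.sqrt (\sum_(k < d) (v ord0 k) ^+ 2).

Definition Ksup {R : realType} {d : nat} (psi : 'rV[R]_d -> 'rV[R]_d -> R) : R :=
  sup [set r | exists y z, r = `|psi y z|].

Definition Dn {R : realType} {d N : nat} (x : 'I_N -> R -> 'rV[R]_d) (tb : R)
  (n : nat) : R :=
  sup [set r | exists (i j : 'I_N) (s t : R),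
        s \in `[n%:R * tb - tb, n%:R * tb] /\ t \in `[n%:R * tb - tb, n%:R * tb] /\
        r = enorm (x i s - x j t)].

Definition M0 {R : realType} {d N : nat} (x : 'I_N -> R -> 'rV[R]_d) (tb : R) : R :=
  sup [set r | exists (i : 'I_N) (s : R), s \in `[- tb, 0] /\ r = enorm (x i s)].

Definition psi0 {R : realType} {d N : nat} (psi : 'rV[R]_d -> 'rV[R]_d -> R)
  (x : 'I_N -> R -> 'rV[R]_d) (tb : R) : R :=
  inf [set r | exists y z, enorm y <= M0 x tb /\ enorm z <= M0 x tb /\ r = psi y z].

Definition Cconst {R : realType} {d N : nat} (psi : 'rV[R]_d -> 'rV[R]_d -> R)
  (x : 'I_N -> R -> 'rV[R]_d) (tb : R) : R :=
  Num.max (1 - expR (- (2 * Ksup psi * tb)))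
          (1 - psi0 psi x tb / Ksup psi * (1 - expR (- (Ksup psi * tb)))).

Definition hk_rhs {R : realType} {d N : nat} (psi : 'rV[R]_d -> 'rV[R]_d -> R)
  (tau : R -> R) (x : 'I_N -> R -> 'rV[R]_d) (i : 'I_N) (t : R) : 'rV[R]_d :=
  (N.-1)%:R^-1 *: \sum_(j < N | j != i)
     psi (x i t) (x j (t - tau t)) *: (x j (t - tau t) - x i t).

(* Main.v *)
Require Import Defs.
From HB Require Import structures.
From mathcomp Require Import all_boot all_order all_algebra.
From mathcomp Require Import all_classical all_reals all_analysis.
Import Order.TTheory GRing.Theory Num.Theory.
Import numFieldNormedType.Exports.
Local Open Scope classical_set_scope.
Local Open Scope ring_scope.
From mathcomp Require Import ring lra.
Lemma left_deriv_ge (R : realType) (f : R -> R) (a c k : R) : a < c ->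
  derivable f c 1 -> (forall t, a < t < c -> f t <= f c + k * (t - c)) -> k <= 'D_1 f c.
Proof.
move=> ac df fle.
rewrite ['D_1 f c]cvg_at_leftE; last exact: df.
apply: limr_ge.
  rewrite -(cvg_at_leftE (fun h => h^-1 *: ((f \o shift c) _ - f c))) //.
  apply: cvg_trans df; apply: cvg_app.
  move=> A [e egt0 Ae]; exists e => // x xe xgt0; apply: Ae => //.
  exact/ltr0_neq0.
near=> h.
have h0 : h < 0 by near: h; exists 1 => /=.
have hac : c - a > - h.
  near: h; exists (c - a); first by rewrite /= subr_gt0.
  move=> h; rewrite /= distrC subr0 => /ltr_normlP [] ? ? _; lra.
have := fle (h + c); rewrite [_%:A]mulr1 addrK.
have -> : a < h + c < c by apply/andP; split; lra.
move=> /(_ isT) H.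
rewrite -(ler_nM2l h0) mulrA divff ?ltr0_neq0 // mul1r /=.
by rewrite mulrC; lra.
Unshelve. all: by end_near. Qed.
Lemma near_ball (R : realType) (P : R -> Prop) (x : R) :
  (\forall t \near x, P t) -> exists2 d, 0 < d & forall t, `|x - t| < d -> P t.
Proof. by move=> /nbhs_ballP [d d0 H]; exists d => // t td; apply: H. Qed.
Arguments near_ball {R P x}.

Lemma cont_affine (R : realType) (B e T0 : R) : continuous (fun t : R => B + e * (1 + t - T0)).
Proof.
move=> t; apply: cvgD; first exact: cvg_cst.
apply: cvgM; first exact: cvg_cst.
apply: cvgB; last exact: cvg_cst.
apply: cvgD; first exact: cvg_cst.
exact: cvg_id.
Qed.

Lemma invariance (R : realType) (N : nat) (p : 'I_N -> R -> R)
  (w : 'I_N -> 'I_N -> R -> R) (tau : R -> R) (tb T0 B : R) :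
  0 < tb -> 0 <= T0 ->
  (forall t, 0 <= t -> 0 <= tau t <= tb) ->
  (forall l t, - tb < t -> {for t, continuous (p l)}) ->
  (forall l t, 0 < t -> derivable (p l) t 1 /\
     'D_1 (p l) t = \sum_(j < N | j != l) w l j t * (p j (t - tau t) - p l t)) ->
  (forall l j t, 0 < t -> 0 <= w l j t) ->
  (forall l s, T0 - tb <= s <= T0 -> p l s <= B) ->
  forall l t, T0 - tb <= t -> p l t <= B.
Proof.
move=> tb0 T00 htau cp ode w0 hB.
suff H : forall eps, 0 < eps -> forall l t, T0 <= t -> p l t < B + eps * (1 + t - T0).
  move=> l t ht; case: (leP t T0) => tT0; first by apply: hB; rewrite ht tT0.
  apply/ler_addgt0Pr => e e0.
  have pos : 0 < 1 + t - T0 by lra.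
  have := H (e / (1 + t - T0)) (divr_gt0 e0 pos) l t (ltW tT0).
  by rewrite divfK ?gt_eqF // => /ltW.
move=> eps eps0.
pose phi := fun t : R => B + eps * (1 + t - T0).
apply: contrapT => /existsNP [l1] /existsNP [t1] /not_implyP [T0t1] /negP.
rewrite -leNgt => Ht1.
pose S := [set t | T0 <= t /\ exists l, phi t <= p l t].
have S1 : S t1 by split => //; exists l1.
have Slb : lbound S T0 by move=> t [].
have hlb : has_lbound S by exists T0.
set tc := inf S.
have tcS : forall t, S t -> tc <= t := ge_inf hlb.
have T0tc : T0 <= tc by apply: lb_le_inf => //; exists t1.
have notS : forall t, T0 <= t -> t < tc -> forall l, p l t < phi t.
  move=> t T0t ttc l; rewrite ltNge; apply/negP => H.
  have : tc <= t by apply: tcS; split => //; exists l.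
  by rewrite leNgt ttc.
have phiT0 : forall l, p l T0 < phi T0.
  move=> l; have := hB l T0; rewrite /phi; have : T0 - tb <= T0 <= T0 by apply/andP; split; lra.
  move=> h1 /(_ h1); lra.
have tcgt : - tb < tc by lra.
have le_tc : forall l, p l tc <= phi tc.
  move=> l; rewrite leNgt; apply/negP => H.
  have hT : T0 < tc.
    rewrite lt_neqAle T0tc andbT; apply/negP => /eqP E.
    by have := phiT0 l; rewrite E; lra.
  have cF : (fun t => p l t - phi t) @ tc --> p l tc - phi tc.
    by apply: cvgB; [exact: cp | exact: cont_affine].
  have h0 : 0 < p l tc - phi tc by rewrite subr_gt0.
  have := cvgr_gt _ cF _ h0; move=> /(_ _) /near_ball [dl dl0 Hd].
  pose t := tc - Num.min dl (tc - T0) / 2.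
  have m1 : Num.min dl (tc - T0) <= dl by rewrite ge_min lexx.
  have m2 : Num.min dl (tc - T0) <= tc - T0 by rewrite ge_min lexx orbT.
  have m3 : 0 < Num.min dl (tc - T0) by rewrite lt_min dl0 subr_gt0 hT.
  have : tc <= t.
    apply: tcS; split; first by rewrite /t; lra.
    exists l; have := Hd t; rewrite /t opprB addrC subrK ger0_norm; last lra.
    move=> /(_ _) h; rewrite ltW // -subr_gt0; apply: h; lra.
  rewrite /t; lra.
have [l Hl] : exists l, phi tc <= p l tc.
  apply: contrapT => Hn.
  have Hn' : forall l, p l tc < phi tc.
    by move=> l; rewrite ltNge; apply/negP => h; apply: Hn; exists l.
  have : \forall t \near tc, forall l, p l t - phi t < 0.
    apply: (@filter_forall R _ (fun l t => p l t - phi t < 0) (nbhs tc) _) => l.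
    have cF : (fun t => p l t - phi t) @ tc --> p l tc - phi tc.
      by apply: cvgB; [exact: cp | exact: cont_affine].
    by apply: (cvgr_lt _ cF); rewrite subr_lt0 Hn'.
  move=> /near_ball [dl dl0 Hd].
  have : tc + dl / 2 <= tc.
    apply: lb_le_inf; first by exists t1.
    move=> t [T0t [l' Hl']]; rewrite leNgt; apply/negP => tlt.
    have tct : tc <= t by apply: tcS; split => //; exists l'.
    have := Hd t; rewrite ler0_norm; last lra.
    move=> /(_ _) /(_ l'); rewrite subr_lt0 => h.
    by have := h ltac:(lra); lra.
  lra.
have Heq : p l tc = phi tc by apply/eqP; rewrite eq_le Hl le_tc.
have hT : T0 < tc.
  rewrite lt_neqAle T0tc andbT; apply/negP => /eqP E.
  by have := phiT0 l; rewrite E Heq ltxx.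
have tc0 : 0 < tc by lra.
have [dtc Dtc] := ode l tc tc0.
have Hk : eps <= 'D_1 (p l) tc.
  apply: (@left_deriv_ge R (p l) T0 tc eps hT dtc) => t /andP [t1' t2'].
  have := notS t (ltW t1') t2' l; rewrite Heq /phi; lra.
have : 'D_1 (p l) tc <= 0.
  rewrite Dtc; apply: sumr_le0 => j _.
  apply: mulr_ge0_le0; first exact: w0.
  rewrite subr_le0 Heq.
  have phimon : forall a b, a <= b -> phi a <= phi b.
    by move=> a b ab; rewrite /phi lerD2l ler_pM2l //; lra.
  have Bphi : B <= phi tc by rewrite /phi lerDl mulr_ge0 //; lra.
  have /andP [ht1 ht2] := htau tc (ltW tc0).
  case: (ltP (tc - tau tc) tc) => hu.
    case: (leP T0 (tc - tau tc)) => hT0u.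
      by apply: le_trans (phimon _ _ (ltW hu)); apply: ltW; apply: notS.
    apply: le_trans Bphi; apply: hB; apply/andP; split; lra.
  have -> : tc - tau tc = tc by apply/eqP; rewrite eq_le hu; lra.
  exact: le_tc.
lra.
Qed.
Lemma decay (R : realType) (f : R -> R) (K c a b : R) : 0 < K -> a <= b ->
  {within `[a, b], continuous f} ->
  (forall t, a < t < b -> derivable f t 1 /\ c - K * f t <= 'D_1 f t) ->
  expR (- (K * (b - a))) * f a + c / K * (1 - expR (- (K * (b - a)))) <= f b.
Proof.
move=> K0 ab cf df.
pose e := fun s : R => expR (K * s).
pose g := fun s : R => f s - c / K.
have de : forall t : R, is_derive t 1 e (expR (K * t) * K).
  move=> t; apply: (@is_derive1_comp _ expR (fun s => K * s)).
  have H := is_deriveZ K (@is_derive_id R R t 1).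
  have -> : (fun s => K * s) = K \*: id by apply/funext => s.
  by apply: is_derive_eq H _; rewrite [_%:A]mulr1.

have dg : forall t : R, a < t < b -> is_derive t 1 g ('D_1 f t).
  move=> t /df [dft _]; rewrite /g.
  have -> : (fun s => f s - c / K) = f - cst (c / K) by apply/funext.
  have H := is_deriveB (derivableP dft) (@is_derive_cst R R R (c / K) t 1).
  by apply: is_derive_eq H _; rewrite subr0.
have key : e a * g a <= e b * g b.
  have := @ger0_derive1_ndecr R (e * g) a b.
  apply => //.
  - move=> t tab; have tab' : a < t < b by rewrite in_itv /= in tab.
    by case: (is_deriveM (de t) (dg t tab')).
  - move=> t tab; have tab' : a < t < b by rewrite in_itv /= in tab.
    case: (is_deriveM (de t) (dg t tab')) => _ Hd; rewrite derive1E Hd.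
    have [_ h] := df t tab'.
    have -> : e t *: 'D_1 f t + g t *: (expR (K * t) * K) = expR (K * t) * ('D_1 f t + K * f t - c).
      have -> : e t *: 'D_1 f t + g t *: (expR (K * t) * K) = expR (K * t) * 'D_1 f t + (f t - c / K) * (expR (K * t) * K) by [].
      by field; rewrite gt_eqF.
    by rewrite mulr_ge0 ?expR_ge0 //; lra.
  - have ce : continuous e.
      by move=> t; apply: continuous_comp; [exact: mulrl_continuous | exact: continuous_expR].
    have ce2 : {within `[a, b], continuous e} by exact: continuous_subspaceT.
    move=> t; apply: cvgM; first exact: (ce2 t).
    by apply: cvgB; [exact: cf | exact: cvg_cst].
have EE : expR (K * b) = expR (K * a) * expR (K * (b - a)) by rewrite -expRD; congr expR; ring.
rewrite /e /g EE in key.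
have k2 : f a - c / K <= expR (K * (b - a)) * (f b - c / K).
  by rewrite -(ler_pM2l (expR_gt0 (K * a))) mulrA.
rewrite expRN; set E := expR (K * (b - a)) in k2 *.
have E0 : 0 < E by exact: expR_gt0.
have k3 : E^-1 * (f a - c / K) <= f b - c / K.
  by rewrite ler_pdivrMl.
rewrite mulrBr mulr1 [c / K * E^-1]mulrC.
rewrite mulrBr in k3; lra.
Qed.
Lemma within_of_pts (R : realType) (a b : R) (f : R -> R) : a <= b -> (forall t, a <= t <= b -> {for t, continuous f}) -> {within `[a, b], continuous f}.
Proof. move=> ab H; apply: continuous_in_subspaceT => t; rewrite inE /= in_itv /= => /H. done. Qed.
Lemma decay1 (R : realType) (N : nat) (f : 'I_N -> R -> R)
  (w : 'I_N -> 'I_N -> R -> R) (tau : R -> R) (tb K T : R) :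
  0 < tb -> 0 < K -> 0 <= T ->
  (forall t, 0 <= t -> 0 <= tau t <= tb) ->
  (forall l t, - tb < t -> {for t, continuous (f l)}) ->
  (forall l t, T - tb <= t -> 0 <= f l t) ->
  (forall l j t, 0 < t -> 0 <= w l j t) ->
  (forall l t, 0 < t -> T <= t -> derivable (f l) t 1 /\
     \sum_(k < N | k != l) w l k t * f k (t - tau t) - K * f l t <= 'D_1 (f l) t) ->
  forall l a b, T <= a -> a <= b -> expR (- (K * (b - a))) * f l a <= f l b.
Proof.
move=> tb0 K0 T0 htau cf f0 w0 df l a b Ta ab.
have := @decay R (f l) K 0 a b K0 ab.
rewrite mul0r mul0r addr0; apply.
  by apply: within_of_pts => // t /andP [ha hb]; apply: cf; lra.
move=> t /andP [ha hb]; have [d1 d2] := df l t ltac:(lra) ltac:(lra).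
split => //; apply: le_trans d2; rewrite lerD2r.
apply: sumr_ge0 => k _.
have /andP [h1 h2] := htau t ltac:(lra).
by rewrite mulr_ge0 ?w0 ?f0 //; lra.
Qed.

Lemma core (R : realType) (N : nat) (g h : 'I_N -> R -> R)
  (w : 'I_N -> 'I_N -> R -> R) (tau : R -> R) (tb K wlo T Dl : R) :
  0 < tb -> 0 < K -> 0 <= T -> 0 <= wlo ->
  (forall t, 0 <= t -> 0 <= tau t <= tb) ->
  (forall l t, - tb < t -> {for t, continuous (g l)}) ->
  (forall l t, - tb < t -> {for t, continuous (h l)}) ->
  (forall l t, T - tb <= t -> 0 <= g l t) ->
  (forall l t, T - tb <= t -> 0 <= h l t) ->
  (forall l t, T - tb <= t -> g l t + h l t = Dl) ->
  (forall l j t, 0 < t -> 0 <= w l j t) ->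
  (forall l j t, 0 < t -> j != l -> wlo <= w l j t) ->
  (forall l t, 0 < t -> T <= t -> derivable (g l) t 1 /\
     \sum_(k < N | k != l) w l k t * g k (t - tau t) - K * g l t <= 'D_1 (g l) t) ->
  (forall l t, 0 < t -> T <= t -> derivable (h l) t 1 /\
     \sum_(k < N | k != l) w l k t * h k (t - tau t) - K * h l t <= 'D_1 (h l) t) ->
  forall i j u0, T + 2 * tb <= u0 ->
  Num.min (expR (- (2 * K * tb))) (wlo * (N.-1)%:R / K * (1 - expR (- (K * tb)))) * Dl
    <= g i u0 + h j u0.
Proof.
move=> tb0 K0 T0 wlo0 htau cg ch g0 h0 ghD w0 wlo_le dg dh i j u0 Tu0.
have Dl0 : 0 <= Dl by rewrite -(ghD i T) ?addr_ge0 ?g0 ?h0 //; lra.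
set e2 := expR (- (2 * K * tb)).
have e2p : 0 < e2 by exact: expR_gt0.
have e21 : e2 <= 1 by rewrite expR_le1 oppr_le0 !mulr_ge0 //; lra.
have decg := @decay1 R N g w tau tb K T tb0 K0 T0 htau cg g0 w0 dg.
have dech := @decay1 R N h w tau tb K T tb0 K0 T0 htau ch h0 w0 dh.
have [big|small] := leP (e2 * Dl) (g i u0 + h j u0).
  apply: le_trans big; rewrite ler_wpM2r // ge_min lexx //.
have ij : i != j.
  apply/negP => /eqP E; move: small; rewrite -E ghD; last lra.
  have : e2 * Dl <= 1 * Dl := ler_wpM2r Dl0 e21.
  rewrite mul1r; lra.
have Gsmall : forall u, u0 - 2 * tb <= u <= u0 -> g i u + h j u < Dl.
  move=> u /andP [u1 u2].
  have E1 := decg i u u0 ltac:(lra) u2.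
  have E2 := dech j u u0 ltac:(lra) u2.
  have ee : e2 <= expR (- (K * (u0 - u))).
    have : K * (u0 - u) <= K * (2 * tb) by rewrite ler_pM2l //; lra.
    by rewrite /e2 ler_expR (_ : 2 * K * tb = K * (2 * tb)); [lra | ring].
  have gu := g0 i u ltac:(lra); have hu := h0 j u ltac:(lra).
  have : e2 * (g i u + h j u) < e2 * Dl.
    apply: le_lt_trans small; rewrite mulrDr.
    apply: lerD; [apply: le_trans E1 | apply: le_trans E2]; exact: ler_wpM2r.
  by rewrite ltr_pM2l.
set c := wlo * (N.-1)%:R * Dl.
have N0 : (0 < N)%N := leq_ltn_trans (leq0n _) (ltn_ord i).
have Hd := @decay R (g i + h j) K c (u0 - tb) u0 K0 ltac:(lra).
have cG : {within `[u0 - tb, u0], continuous (g i + h j)}.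
  apply: within_of_pts; first lra.
  by move=> t /andP [? ?]; apply: continuousD; [apply: cg | apply: ch]; lra.
have dG : forall t : R, u0 - tb < t < u0 -> derivable (g i + h j) t 1 /\ c - K * (g i + h j) t <= 'D_1 (g i + h j) t.
  move=> t /andP [t1 t2].
  have [dgi Dgi] := dg i t ltac:(lra) ltac:(lra).
  have [dhj Dhj] := dh j t ltac:(lra) ltac:(lra).
  split; first exact: derivableD.
  rewrite deriveD //.
  set t' := t - tau t.
  have /andP [ta1 ta2] := htau t ltac:(lra).
  have Gs := Gsmall t' ltac:(rewrite /t'; apply/andP; split; lra).
  have t'lb : T <= t' by rewrite /t'; lra.
  suff Hs : c <= \sum_(k < N | k != i) w i k t * g k t' + \sum_(k < N | k != j) w j k t * h k t'.
    have -> : (g i + h j) t = g i t + h j t by [].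
    lra.
  have S1 : \sum_(k < N | k != i) wlo * g k t' <= \sum_(k < N | k != i) w i k t * g k t'.
    apply: ler_sum => k ki; apply: ler_wpM2r; [apply: g0; lra | apply: wlo_le; [lra | exact: ki]].
  have S2 : \sum_(k < N | k != j) wlo * h k t' <= \sum_(k < N | k != j) w j k t * h k t'.
    apply: ler_sum => k kj; apply: ler_wpM2r; [apply: h0; lra | apply: wlo_le; [lra | exact: kj]].
  rewrite -!mulr_sumr in S1 S2.
  have E1 : \sum_(k < N | k != i) g k t' = \sum_(k < N) g k t' - g i t'.
    by rewrite [in RHS](bigD1 i) //= addrC addrK.
  have E2 : \sum_(k < N | k != j) h k t' = \sum_(k < N) h k t' - h j t'.
    by rewrite [in RHS](bigD1 j) //= addrC addrK.
  have E3 : \sum_(k < N) g k t' + \sum_(k < N) h k t' = N%:R * Dl.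
    rewrite -big_split /= (eq_bigr (fun _ => Dl)); last by move=> k _; apply: ghD; lra.
    by rewrite sumr_const card_ord mulr_natl.
  have NN : (N%:R : R) = (N.-1)%:R + 1 by rewrite natr1 prednK.
  rewrite NN mulrDl mul1r in E3.
  have : (N.-1)%:R * Dl <= \sum_(k < N | k != i) g k t' + \sum_(k < N | k != j) h k t'.
    rewrite E1 E2; lra.
  move/(ler_wpM2l wlo0); rewrite mulrDr mulrA /c => H; lra.
have key := Hd cG dG.
rewrite (_ : u0 - (u0 - tb) = tb) in key; last by ring.
have -> : g i u0 + h j u0 = (g i + h j) u0 by [].
apply: le_trans key.
have G0 : 0 <= (g i + h j) (u0 - tb).
  by rewrite /= addr_ge0 ?g0 ?h0 //; lra.
have e1p := expR_gt0 (- (K * tb)).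
apply: le_trans (_ : c / K * (1 - expR (- (K * tb))) <= _); last first.
  by rewrite lerDr mulr_ge0 // ltW.
rewrite /c (_ : wlo * (N.-1)%:R * Dl / K * (1 - expR (- (K * tb))) =
  (wlo * (N.-1)%:R / K * (1 - expR (- (K * tb)))) * Dl); last by field; rewrite gt_eqF.
by rewrite ler_wpM2r // ge_min lexx orbT.
Qed.

Definition dotv {R : realType} {d : nat} (a b : 'rV[R]_d) : R :=
  \sum_(k < d) a ord0 k * b ord0 k.

Lemma dotvBl {R : realType} {d : nat} (a b c : 'rV[R]_d) : dotv (a - b) c = dotv a c - dotv b c.
Proof.
by rewrite /dotv -sumrB; apply: eq_bigr => k _; rewrite !mxE mulrBl.
Qed.

Lemma dotvNl {R : realType} {d : nat} (a c : 'rV[R]_d) : dotv (- a) c = - dotv a c.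
Proof.
by rewrite /dotv -sumrN; apply: eq_bigr => k _; rewrite !mxE mulNr.
Qed.

Lemma dotvZl {R : realType} {d : nat} (k : R) (a c : 'rV[R]_d) : dotv (k *: a) c = k * dotv a c.
Proof.
by rewrite /dotv mulr_sumr; apply: eq_bigr => i _; rewrite !mxE mulrA.
Qed.

Lemma dotv_suml {R : realType} {d N : nat} (P : pred 'I_N) (F : 'I_N -> 'rV[R]_d) c :
  dotv (\sum_(j < N | P j) F j) c = \sum_(j < N | P j) dotv (F j) c.
Proof.
rewrite /dotv exchange_big /=; apply: eq_bigr => k _.
by rewrite summxE mulr_suml.
Qed.

Lemma enorm_ge0 {R : realType} {d : nat} (a : 'rV[R]_d) : 0 <= enorm a.
Proof. exact: sqrtr_ge0. Qed.

Lemma enorm_sq {R : realType} {d : nat} (a : 'rV[R]_d) : enorm a ^+ 2 = dotv a a.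
Proof.
rewrite /enorm sqr_sqrtr; last by apply: sumr_ge0 => k _; rewrite sqr_ge0.
by apply: eq_bigr => k _; rewrite expr2.
Qed.

Lemma enormN {R : realType} {d : nat} (a : 'rV[R]_d) : enorm (- a) = enorm a.
Proof.
by rewrite /enorm; congr Num.sqrt; apply: eq_bigr => k _; rewrite mxE sqrrN.
Qed.

Lemma CS {R : realType} {d : nat} (a b : 'rV[R]_d) : dotv a b <= enorm a * enorm b.
Proof.
set al := enorm a; set be := enorm b.
have al0 : 0 <= al := enorm_ge0 a.
have be0 : 0 <= be := enorm_ge0 b.
have Ha : al ^+ 2 = \sum_(k < d) a ord0 k ^+ 2 by rewrite enorm_sq /dotv; apply: eq_bigr => k _; rewrite expr2.
have Hb : be ^+ 2 = \sum_(k < d) b ord0 k ^+ 2 by rewrite enorm_sq /dotv; apply: eq_bigr => k _; rewrite expr2.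
have [al_eq0|al_gt0] := eqVneq al 0.
  have a0 : forall k, a ord0 k = 0.
    move=> k; have : \sum_(k < d) a ord0 k ^+ 2 = 0 by rewrite -Ha al_eq0 expr0n.
    move/eqP; rewrite psumr_eq0; last by move=> i _; rewrite sqr_ge0.
    by move/allP => /(_ k (mem_index_enum _)) /=; rewrite sqrf_eq0 => /eqP.
  rewrite al_eq0 mul0r /dotv big1 // => k _; by rewrite a0 mul0r.
have [be_eq0|be_gt0] := eqVneq be 0.
  have b0 : forall k, b ord0 k = 0.
    move=> k; have : \sum_(k < d) b ord0 k ^+ 2 = 0 by rewrite -Hb be_eq0 expr0n.
    move/eqP; rewrite psumr_eq0; last by move=> i _; rewrite sqr_ge0.
    by move/allP => /(_ k (mem_index_enum _)) /=; rewrite sqrf_eq0 => /eqP.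
  rewrite be_eq0 mulr0 /dotv big1 // => k _; by rewrite b0 mulr0.
have alp : 0 < al by rewrite lt_neqAle eq_sym al_gt0 al0.
have bep : 0 < be by rewrite lt_neqAle eq_sym be_gt0 be0.
have key : forall k, 2 * al * be * (a ord0 k * b ord0 k) <=
    be ^+ 2 * a ord0 k ^+ 2 + al ^+ 2 * b ord0 k ^+ 2.
  move=> k; have := sqr_ge0 (be * a ord0 k - al * b ord0 k).
  rewrite sqrrB !exprMn => h.
  have -> : 2 * al * be * (a ord0 k * b ord0 k) = (be * a ord0 k) * (al * b ord0 k) *+ 2.
    by rewrite mulr2n; ring.
  lra.
have S : \sum_(k < d) 2 * al * be * (a ord0 k * b ord0 k) <=
    \sum_(k < d) (be ^+ 2 * a ord0 k ^+ 2 + al ^+ 2 * b ord0 k ^+ 2).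
  by apply: ler_sum => k _; exact: key.
rewrite -mulr_sumr big_split /= -!mulr_sumr -Ha -Hb in S.
have : 2 * al * be * dotv a b <= 2 * al * be * (al * be).
  have E : be ^+ 2 * al ^+ 2 + al ^+ 2 * be ^+ 2 = 2 * al * be * (al * be) by ring.
  by rewrite -E.
by rewrite ler_pM2l //; apply: mulr_gt0 => //; apply: mulr_gt0.
Qed.

Lemma enormB_le {R : realType} {d : nat} (a b : 'rV[R]_d) : enorm (a - b) <= enorm a + enorm b.
Proof.
have h0 := enorm_ge0 (a - b).
have [z|nz] := eqVneq (enorm (a - b)) 0.
  by rewrite z addr_ge0 // enorm_ge0.
have p : 0 < enorm (a - b) by rewrite lt_neqAle eq_sym nz h0.
have : enorm (a - b) ^+ 2 <= (enorm a + enorm b) * enorm (a - b).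
  rewrite enorm_sq dotvBl mulrDl.
  have := CS a (a - b); have := CS (- b) (a - b); rewrite dotvNl enormN; lra.
by rewrite expr2 ler_pM2r.
Qed.
Lemma cont_sum {T : topologicalType} {R : realType} {I : Type} (r : seq I)
  (F : I -> T -> R) x :
  (forall i, {for x, continuous (F i)}) -> {for x, continuous (fun a => \sum_(i <- r) F i a)}.
Proof.
move=> H; elim: r => [|i r IH].
  have -> : (fun a => \sum_(j <- [::]) F j a) = (fun _ => 0) by apply/funext => a; rewrite big_nil.
  exact: cvg_cst.
have -> : (fun a => \sum_(j <- i :: r) F j a) = (fun a => F i a + \sum_(j <- r) F j a).
  by apply/funext => a; rewrite big_cons.
by apply: cvgD; [exact: H | exact: IH].
Qed.

Lemma dotv_cont {R : realType} {d : nat} (v : 'rV[R]_d) : continuous (fun a : 'rV[R]_d => dotv a v).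
Proof.
move=> a; rewrite /dotv; apply: cont_sum => k.
have h1 := (@coord_continuous R 1 d ord0 k a).
have h2 : (fun _ : 'rV[R]_d => v ord0 k) @ a --> v ord0 k.
  by apply: cvg_cst; exact: nbhs_filter.
exact: (continuousM h1 h2).
Qed.

Lemma dotv_cont2 {R : realType} {d : nat} : continuous (fun a : 'rV[R]_d => dotv a a).
Proof.
move=> a; rewrite /dotv; apply: cont_sum => k.
exact: (continuousM (@coord_continuous R 1 d ord0 k a) (@coord_continuous R 1 d ord0 k a)).
Qed.

Lemma is_derive_mulc {R : realType} (f : R -> R) (t c df : R) :
  is_derive t 1 f df -> is_derive t 1 (fun s => f s * c) (df * c).
Proof.
move=> H; have := is_deriveZ c H.
have -> : (c \*: f) = (fun s => f s * c) by apply/funext => s; rewrite /= mulrC.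
by move=> H2; apply: is_derive_eq H2 _; rewrite mulrC.
Qed.

Lemma proj_ode {R : realType} {N d : nat} (psi : 'rV[R]_d -> 'rV[R]_d -> R)
  (tau : R -> R) (x : 'I_N -> R -> 'rV[R]_d) (v : 'rV[R]_d) :
  (forall i t, 0 < t -> derivable (x i) t 1 /\ 'D_1 (x i) t = hk_rhs psi tau x i t) ->
  forall l t, 0 < t -> derivable (fun s => dotv (x l s) v) t 1 /\
   'D_1 (fun s => dotv (x l s) v) t = \sum_(j < N | j != l)
      ((N.-1)%:R^-1 * psi (x l t) (x j (t - tau t))) *
      (dotv (x j (t - tau t)) v - dotv (x l t) v).
Proof.
move=> ode l t t0.
have [dx Dx] := ode l t t0.
have dc : forall k, is_derive t 1 (fun s => x l s ord0 k) ('D_1 (x l) t ord0 k).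
  move=> k; have dk := (derivable_mxP _ _ _).1 dx ord0 k.
  apply: DeriveDef => //; by rewrite derive_mx // mxE.
have Hs : is_derive t 1 (\sum_(k < d) (fun s => x l s ord0 k * v ord0 k))
    (\sum_(k < d) 'D_1 (x l) t ord0 k * v ord0 k).
  apply: is_derive_sum => k; exact: is_derive_mulc.
have E : (fun s => dotv (x l s) v) = \sum_(k < d) (fun s => x l s ord0 k * v ord0 k).
  by apply/funext => s; rewrite /dotv fct_sumE.
rewrite E; split; first by case: Hs.
case: Hs => _ ->.
have -> : \sum_(k < d) 'D_1 (x l) t ord0 k * v ord0 k = dotv ('D_1 (x l) t) v by [].
rewrite Dx /hk_rhs dotvZl dotv_suml mulr_sumr; apply: eq_bigr => j _.
by rewrite dotvZl dotvBl mulrA.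
Qed.

Lemma ode_neg {R : realType} {N : nat} (p : 'I_N -> R -> R) (w : 'I_N -> 'I_N -> R -> R) (tau : R -> R) :
  (forall l t, 0 < t -> derivable (p l) t 1 /\
     'D_1 (p l) t = \sum_(j < N | j != l) w l j t * (p j (t - tau t) - p l t)) ->
  forall l t, 0 < t -> derivable (fun s => - p l s) t 1 /\
     'D_1 (fun s => - p l s) t = \sum_(j < N | j != l) w l j t * (- p j (t - tau t) - - p l t).
Proof.
move=> ode l t t0; have [d1 d2] := ode l t t0.
have H := is_deriveN (derivableP d1).
have -> : (fun s => - p l s) = - p l by apply/funext.
split; first by case: H.
case: H => _ ->; rewrite d2 -sumrN; apply: eq_bigr => j _; ring.
Qed.

Lemma hbound {R : realType} {N : nat} (p : 'I_N -> R -> R) (w : 'I_N -> 'I_N -> R -> R)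
  (tau : R -> R) (K T c : R) :
  (forall l t, 0 < t -> derivable (p l) t 1 /\
     'D_1 (p l) t = \sum_(j < N | j != l) w l j t * (p j (t - tau t) - p l t)) ->
  (forall l t, 0 < t -> \sum_(j < N | j != l) w l j t <= K) ->
  (forall l t, 0 < t -> T <= t -> c <= p l t) ->
  forall l t, 0 < t -> T <= t -> derivable (fun s => p l s - c) t 1 /\
     \sum_(k < N | k != l) w l k t * (p k (t - tau t) - c) - K * (p l t - c)
       <= 'D_1 (fun s => p l s - c) t.
Proof.
move=> ode wK cp l t t0 Tt; have [d1 d2] := ode l t t0.
have H := is_deriveB (derivableP d1) (@is_derive_cst R R R c t 1).
have -> : (fun s => p l s - c) = p l - cst c by apply/funext.
split; first by case: H.
case: H => _ ->; rewrite subr0 d2.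
have -> : \sum_(j < N | j != l) w l j t * (p j (t - tau t) - p l t) =
    \sum_(j < N | j != l) w l j t * (p j (t - tau t) - c) -
    (\sum_(j < N | j != l) w l j t) * (p l t - c).
  rewrite mulr_suml -sumrB; apply: eq_bigr => j _; ring.
rewrite lerD2l lerN2; apply: ler_wpM2r; last exact: wK.
by rewrite subr_ge0; apply: cp.
Qed.

Lemma enorm_le1 {R : realType} {d : nat} (a : 'rV[R]_d) : enorm a <= 1 + dotv a a.
Proof.
have h := enorm_ge0 a; rewrite -enorm_sq.
case: (leP (enorm a) 1) => h1.
  by rewrite ler_wpDr // sqr_ge0.
have : enorm a <= enorm a ^+ 2 by rewrite expr2 ler_peMr //; lra.
lra.
Qed.

Theorem mainTheorem7 (R : realType) (N d : nat) (tb : R)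
  (tau : R -> R) (psi : 'rV[R]_d -> 'rV[R]_d -> R) (x : 'I_N -> R -> 'rV[R]_d) :
  (2 <= N)%N -> (1 <= d)%N -> 0 < tb ->
  {within `[0, +oo[, continuous tau} ->
  (forall t, 0 <= t -> 0 <= tau t <= tb) ->
  continuous (fun p : 'rV[R]_d * 'rV[R]_d => psi p.1 p.2) ->
  (exists M, forall y z, `|psi y z| <= M) ->
  (forall y z, 0 < psi y z) ->
  (forall i, {within `[- tb, +oo[, continuous (x i)}) ->
  (forall i t, 0 < t -> derivable (x i) t 1 /\ 'D_1 (x i) t = hk_rhs psi tau x i t) ->
  let C := Cconst psi x tb in
  let Ct := 1 - expR (- (Ksup psi * tb)) * (1 - C) in
  (forall n : nat, (2 <= n)%N -> Dn x tb n.+1 <= Ct * Dn x tb (n - 2)) /\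
  (forall n : nat, Dn x tb (3 * n) <= Ct ^+ n * Dn x tb 0).
Proof.
move=> N2 d1 tb0 ctau htau cpsi [Mb Mbnd] psipos cx ode C Ct.
have SKhas : has_ubound [set r | exists y z, r = `|psi y z|].
  by exists Mb => r [y [z ->]].
have psiK : forall y z, psi y z <= Ksup psi.
  move=> y z; apply: le_trans (ler_norm _) _; apply: (ub_le_sup SKhas); by exists y, z.
set K := Ksup psi.
have K0 : 0 < K by apply: lt_le_trans (psipos 0 0) (psiK 0 0).
have N0 : (0 < N)%N by apply: leq_trans N2.
pose i0 : 'I_N := Ordinal N0.
have N1 : (N.-1)%:R != 0 :> R by rewrite pnatr_eq0 -lt0n -ltnS prednK.
have N1p : 0 < (N.-1)%:R :> R by rewrite lt_neqAle eq_sym N1 ler0n.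
have cxt : forall l t, - tb < t -> {for t, continuous (x l)}.
  move=> l t ht; have [cin _] := (continuous_within_itvcyP _ _).1 (cx l).
  by apply: cin; rewrite in_itv /= andbT.
have M0bnd : has_ubound [set r | exists (i : 'I_N) (s : R), s \in `[- tb, 0] /\ r = enorm (x i s)].
  have : forall i, exists B : R, forall s, s \in `[- tb, 0] -> dotv (x i s) (x i s) <= B.
    move=> i.
    have sub : `[- tb, 0] `<=` `[- tb, +oo[.
      by move=> s; rewrite /= !in_itv /= andbT => /andP [].
    have cw0 := continuous_subspaceW sub (cx i).
    have cw : {within `[- tb, 0], continuous (fun s => dotv (x i s) (x i s))}.
      by move=> s; exact: (continuous_comp (cw0 s) (dotv_cont2 _)).
    have hle : - tb <= 0 by rewrite oppr_le0 ltW.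
    have [c _ Hc] := EVT_max hle cw.
    by exists (dotv (x i c) (x i c)).
  move=> /fin_all_exists [Bf HB].
  exists (1 + \sum_i `|Bf i|) => r [i [s [hs ->]]].
  apply: le_trans (enorm_le1 _) _; rewrite lerD2l.
  apply: le_trans (HB i s hs) _; apply: le_trans (ler_norm _) _.
  rewrite (bigD1 i) //= lerDl; exact: sumr_ge0.
have M0ub : forall i s, - tb <= s <= 0 -> enorm (x i s) <= M0 x tb.
  by move=> i s hs; apply: (ub_le_sup M0bnd); exists i, s; split => //; rewrite in_itv /= hs.
have M00 : 0 <= M0 x tb.
  apply: le_trans (M0ub i0 0 _); first exact: enorm_ge0.
  by rewrite lexx andbT oppr_le0 ltW.
pose w := fun (l j : 'I_N) (t : R) => (N.-1)%:R^-1 * psi (x l t) (x j (t - tau t)).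
have w0 : forall l j t, 0 < t -> 0 <= w l j t.
  by move=> l j t _; rewrite /w mulr_ge0 ?invr_ge0 ?ler0n // ltW.
have projode : forall v l t, 0 < t -> derivable (fun s => dotv (x l s) v) t 1 /\ 'D_1 (fun s => dotv (x l s) v) t = \sum_(j < N | j != l)
      w l j t * (dotv (x j (t - tau t)) v - dotv (x l t) v).
  by move=> v; exact: proj_ode.
have projc : forall v l t, - tb < t -> {for t, continuous (fun s => dotv (x l s) v)}.
  by move=> v l t ht; exact: (continuous_comp (cxt l t ht) (dotv_cont v _)).
have ball : forall l t, - tb <= t -> enorm (x l t) <= M0 x tb.
  move=> l t ht; case: (leP t 0) => t0; first by apply: M0ub; rewrite ht t0.
  set v := x l t.
  have inv := @invariance R N (fun k s => dotv (x k s) v) w tau tb 0 (M0 x tb * enorm v)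
    tb0 (lexx 0) htau (projc v) (projode v) w0.
  have : dotv v v <= M0 x tb * enorm v.
    apply: inv; last by rewrite sub0r.
    move=> k s hs; apply: le_trans (CS _ _) _; apply: ler_wpM2r; first exact: enorm_ge0.
    by apply: M0ub; rewrite -(sub0r tb).
  rewrite -enorm_sq expr2.
  have [z|nz] := eqVneq (enorm v) 0; first by rewrite z.
  have p : 0 < enorm v by rewrite lt_neqAle eq_sym nz enorm_ge0.
  by rewrite ler_pM2r.
have psi0lb : forall y z, enorm y <= M0 x tb -> enorm z <= M0 x tb -> psi0 psi x tb <= psi y z.
  move=> y z hy hz; apply: (ge_inf _); last by exists y, z.
  by exists 0 => r [y' [z' [_ [_ ->]]]]; apply: ltW.
have cnt : forall l : 'I_N, \sum_(j < N | j != l) (1 : R) = (N.-1)%:R.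
  move=> l; have : \sum_(j < N) (1 : R) = N%:R by rewrite sumr_const card_ord.
  rewrite (bigD1 l) //= => H.
  have NN : (N%:R : R) = (N.-1)%:R + 1 by rewrite natr1 prednK.
  lra.
have wsum : forall l t, 0 < t -> \sum_(j < N | j != l) w l j t <= K.
  move=> l t _.
  apply: le_trans (_ : \sum_(j < N | j != l) (N.-1)%:R^-1 * K <= K).
    by apply: ler_sum => j _; apply: ler_wpM2l; [rewrite invr_ge0 ler0n | exact: psiK].
  have -> : \sum_(j < N | j != l) (N.-1)%:R^-1 * K = (N.-1)%:R^-1 * K * \sum_(j < N | j != l) 1.
    by rewrite mulr_sumr; apply: eq_bigr => j _; rewrite mulr1.
  by rewrite cnt mulrAC mulVf // mul1r.
pose wlo := Num.max (psi0 psi x tb) 0 / (N.-1)%:R.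
have wlo0 : 0 <= wlo by rewrite /wlo divr_ge0 // ?ler0n // le_max lexx orbT.
have wlole : forall l j t, 0 < t -> j != l -> wlo <= w l j t.
  move=> l j t t0 _; rewrite /wlo /w mulrC ler_wpM2l ?invr_ge0 ?ler0n //.
  rewrite ge_max (ltW (psipos _ _)) andbT; apply: psi0lb; apply: ball; first lra.
  by have := htau t (ltW t0); lra.
set e1 := expR (- (K * tb)).
set e2 := expR (- (2 * K * tb)).
have e1p : 0 < e1 by exact: expR_gt0.
have e2p : 0 < e2 by exact: expR_gt0.
have e11 : e1 <= 1 by rewrite expR_le1 oppr_le0 mulr_ge0 // ltW.
have e21 : e2 <= 1 by rewrite expR_le1 oppr_le0 !mulr_ge0 // ltW.
have Cdef : C = Num.max (1 - e2) (1 - psi0 psi x tb / K * (1 - e1)) by [].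
have CtE : Ct = 1 - e1 * (1 - C) by [].
have C1 : 1 - e2 <= C by rewrite Cdef le_max lexx.
have C2 : 1 - psi0 psi x tb / K * (1 - e1) <= C by rewrite Cdef le_max lexx orbT.
have Ct0 : 0 <= Ct.
  rewrite CtE subr_ge0; apply: le_trans (_ : e1 * e2 <= 1); last first.
    by rewrite mulr_ile1 // ltW.
  by apply: ler_wpM2l; [exact: ltW | lra].
have Ctle : 1 - e1 * Num.min e2 (wlo * (N.-1)%:R / K * (1 - e1)) <= Ct.
  rewrite CtE lerD2l lerN2; apply: ler_wpM2l; first exact: ltW.
  rewrite le_min; apply/andP; split; first lra.
  apply: le_trans (_ : psi0 psi x tb / K * (1 - e1) <= _); first lra.
  rewrite /wlo divfK //.
  apply: ler_wpM2r; first by rewrite subr_ge0.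
  by apply: ler_wpM2r; [rewrite invr_ge0 ltW | rewrite le_max lexx].
have part1 : forall n, (2 <= n)%N -> Dn x tb n.+1 <= Ct * Dn x tb (n - 2).
  move=> n n2.
  set T := (n - 2)%:R * tb.
  have T0 : 0 <= T by rewrite /T mulr_ge0 ?ler0n // ltW.
  have Wa : n.+1%:R * tb - tb = T + 2 * tb by rewrite /T natrB // -natr1; ring.
  have Wb : n.+1%:R * tb = T + 3 * tb by rewrite /T natrB // -natr1; ring.
  set D' := Dn x tb (n - 2).
  have SDub : forall i j s t, T - tb <= s <= T -> T - tb <= t <= T ->
      enorm (x i s - x j t) <= D'.
    move=> i j s t hs ht; rewrite /D' /Dn -/T.
    apply: ub_le_sup; last by exists i, j, s, t; rewrite !in_itv /=; split => //; split.
    exists (M0 x tb + M0 x tb) => r [i' [j' [s' [t' [hs' [ht' ->]]]]]].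
    move: hs' ht'; rewrite !in_itv /= -/T => /andP [hs1 hs2] /andP [ht1 ht2].
    apply: le_trans (enormB_le _ _) _; apply: lerD; apply: ball; lra.
  have D'0 : 0 <= D'.
    apply: le_trans (SDub i0 i0 T T _ _); first exact: enorm_ge0.
      by apply/andP; split; lra.
    by apply/andP; split; lra.
  rewrite /Dn; apply: ge_sup.
    exists (enorm (x i0 (T + 2 * tb) - x i0 (T + 2 * tb))), i0, i0, (T + 2 * tb), (T + 2 * tb).
    by rewrite !in_itv /= Wa Wb; split; [apply/andP; split; lra | split; [apply/andP; split; lra|]].
  move=> r [i [j [s [t [hs [ht ->]]]]]].
  move: hs ht; rewrite !in_itv /= Wa Wb => /andP [hs1 hs2] /andP [ht1 ht2].
  set v := x i s - x j t.
  have [v0|vnz] := eqVneq (enorm v) 0; first by rewrite v0 mulr_ge0.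
  have vp : 0 < enorm v by rewrite lt_neqAle eq_sym vnz enorm_ge0.
  pose p := fun k σ => dotv (x k σ) v.
  pose P := [set y0 | exists k σ, T - tb <= σ <= T /\ y0 = p k σ].
  have pub : forall k σ, T - tb <= σ -> p k σ <= M0 x tb * enorm v.
    move=> k σ hσ; apply: le_trans (CS _ _) _; apply: ler_wpM2r; first exact: enorm_ge0.
    by apply: ball; lra.
  have plb : forall k σ, T - tb <= σ -> - (M0 x tb * enorm v) <= p k σ.
    move=> k σ hσ; rewrite lerNl /p -dotvNl; apply: le_trans (CS _ _) _; rewrite enormN.
    apply: ler_wpM2r; first exact: enorm_ge0.
    by apply: ball; lra.
  have Pub : has_ubound P.
    by exists (M0 x tb * enorm v) => y0 [k [σ [/andP [h1 h2] ->]]]; apply: pub.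
  have Plb : has_lbound P.
    by exists (- (M0 x tb * enorm v)) => y0 [k [σ [/andP [h1 h2] ->]]]; apply: plb.
  have Pne : P !=set0 by exists (p i0 T), i0, T; split => //; apply/andP; split; lra.
  set M := sup P.
  set m := inf P.
  have pM : forall k σ, T - tb <= σ <= T -> p k σ <= M.
    by move=> k σ h; apply: (ub_le_sup Pub); exists k, σ.
  have pm : forall k σ, T - tb <= σ <= T -> m <= p k σ.
    by move=> k σ h; apply: (ge_inf Plb); exists k, σ.
  have MmD : M - m <= D' * enorm v.
    have H1 : forall b, P b -> M <= b + D' * enorm v.
      move=> b [k' [σ' [h' ->]]]; apply: ge_sup Pne _ => a [k [σ [h ->]]].
      have := CS (x k σ - x k' σ') v; rewrite dotvBl => H.
      have := SDub k k' σ σ' h h' => H2.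
      have H3 : enorm (x k σ - x k' σ') * enorm v <= D' * enorm v.
        by apply: ler_wpM2r => //; exact: enorm_ge0.
      rewrite /p; lra.
    have : M - D' * enorm v <= m.
      by apply: lb_le_inf Pne _ => b Pb; have := H1 b Pb; lra.
    lra.
  have up := @invariance R N p w tau tb T M tb0 T0 htau (projc v) (projode v) w0 pM.
  have cq : forall k t, - tb < t -> {for t, continuous (fun s => - p k s)}.
    by move=> k t' ht'; apply: cvgN; exact: projc.
  have pm' : forall k σ, T - tb <= σ <= T -> - p k σ <= - m.
    by move=> k σ hh; rewrite lerN2; exact: pm.
  have low := @invariance R N (fun k s => - p k s) w tau tb T (- m) tb0 T0 htau cq
    (@ode_neg R N p w tau (projode v)) w0 pm'.
  have inM : forall k σ, T - tb <= σ -> m <= p k σ <= M.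
    move=> k σ h; rewrite up // andbT; have := low k σ h; lra.
  pose g := fun k σ => - p k σ - - M.
  pose h := fun k σ => p k σ - m.
  have cg : forall k t, - tb < t -> {for t, continuous (g k)}.
    by move=> k t' ht'; apply: cvgB; [exact: cq | exact: cvg_cst].
  have ch : forall k t, - tb < t -> {for t, continuous (h k)}.
    by move=> k t' ht'; apply: cvgB; [exact: projc | exact: cvg_cst].
  have g0 : forall k t, T - tb <= t -> 0 <= g k t.
    by move=> k t' ht'; have := inM k t' ht'; rewrite /g; lra.
  have h0 : forall k t, T - tb <= t -> 0 <= h k t.
    by move=> k t' ht'; have := inM k t' ht'; rewrite /h; lra.
  have ghD : forall k t, T - tb <= t -> g k t + h k t = M - m.
    by move=> k t' _; rewrite /g /h; ring.
  have dg := @hbound R N (fun k s => - p k s) w tau K T (- M) (@ode_neg R N p w tau (projode v)) wsum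
    (fun k t' _ ht' => ltac:(have := inM k t' ltac:(lra); lra)).
  have dh := @hbound R N p w tau K T m (projode v) wsum
    (fun k t' _ ht' => ltac:(have := inM k t' ltac:(lra); lra)).
  set u0 := Num.min s t.
  have u0a : T + 2 * tb <= u0 by rewrite le_min hs1 ht1.
  have u0s : u0 <= s by rewrite ge_min lexx.
  have u0t : u0 <= t by rewrite ge_min lexx orbT.
  have Hc := @core R N g h w tau tb K wlo T (M - m) tb0 K0 T0 wlo0 htau cg ch g0 h0 ghD
    w0 wlole dg dh i j u0 u0a.
  have dgi := @decay1 R N g w tau tb K T tb0 K0 T0 htau cg g0 w0 dg i u0 s ltac:(lra) u0s.
  have dhj := @decay1 R N h w tau tb K T tb0 K0 T0 htau ch h0 w0 dh j u0 t ltac:(lra) u0t.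
  have ee : forall z, u0 <= z <= T + 3 * tb -> e1 <= expR (- (K * (z - u0))).
    move=> z /andP [z1 z2]; rewrite /e1 ler_expR lerN2 ler_pM2l //; lra.
  have F1 : e1 * g i u0 <= g i s.
    apply: le_trans dgi; apply: ler_wpM2r; first by apply: g0; lra.
    by apply: ee; rewrite u0s hs2.
  have F2 : e1 * h j u0 <= h j t.
    apply: le_trans dhj; apply: ler_wpM2r; first by apply: h0; lra.
    by apply: ee; rewrite u0t ht2.
  set mn := Num.min e2 (wlo * (N.-1)%:R / K * (1 - e1)) in Hc Ctle.
  have F4 : e1 * (mn * (M - m)) <= e1 * g i u0 + e1 * h j u0.
    by rewrite -mulrDr; apply: ler_wpM2l => //; exact: ltW.
  have Mm0 : 0 <= M - m.
    have := inM i0 T ltac:(lra); lra.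
  have F5 : (1 - e1 * mn) * (M - m) <= Ct * (M - m) by apply: ler_wpM2r.
  have F6 : Ct * (M - m) <= Ct * (D' * enorm v) by apply: ler_wpM2l.
  have Id : (1 - e1 * mn) * (M - m) = (M - m) - e1 * (mn * (M - m)) by ring.
  have Ev : enorm v ^+ 2 = p i s - p j t by rewrite enorm_sq /p {1}/v dotvBl.
  have Egh : p i s - p j t = (M - m) - (g i s + h j t) by rewrite /g /h; ring.
  have : enorm v * enorm v <= Ct * D' * enorm v.
    rewrite -expr2 -mulrA; lra.
  by rewrite ler_pM2r.
split => //.
elim=> [|n IH]; first by rewrite muln0 expr0 mul1r.
have E : (3 * n.+1 = (3 * n + 2).+1)%N by rewrite mulnS addn2 add3n.
rewrite E; apply: le_trans (part1 _ _) _; first by rewrite leq_addl.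
rewrite addnK exprS -mulrA; by apply: ler_wpM2l.
Qed.
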